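(* Let $S$ and $Z$ be finite nonempty alphabets with $\#Z\le\#S$, let $\tau:S\to Z$ be surjective, and let $\sigma_\tau:\Sigma\to\Sigma$ be the associated full zip shift map. Then $\sigma_\tau$ is transitive (there exists $x\in\Sigma$ whose forward orbit $\{\sigma_\tau^n(x):n\ge0\}$ is dense in $\Sigma$) and pre-transitive (there exists $x\in\Sigma$ such that $\bigcup_{n\ge0}\sigma_\tau^{-n}(x)$ is dense in $\Sigma$).
   Context: The zip shift space $\Sigma=\Sigma_{Z,S}$ is the set of bi-infinite sequences $x=(x_i)_{i\in\mathbb{Z}}$ with $x_i\in S$ for $i\ge0$ and $x_i\in Z$ for $i<0$, with metric $d(x,y)=2^{-M(x,y)}$, $M(x,y)=\min\{|i|:x_i\neq y_i\}$. The zip shift map is defined by $(\sigma_\tau x)_i=x_{i+1}$ for $i\neq-1$ and $(\sigma_\tau x)_{-1}=\tau(x_0)$. Here $\sigma_\tau^{-n}(x)$ denotes the set of all $y\in\Sigma$ with $\sigma_\tau^n(y)=x$. *)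

(* Defs.v *)
From mathcomp Require Import all_boot.
From Stdlib Require Import Reals ZArith.
Set Implicit Arguments.
Unset Strict Implicit.
Unset Printing Implicit Defensive.

(* A point of the zip shift space Sigma_{Z,S}:
   x_i = pos i  (i >= 0, in S),   x_{-(k+1)} = neg k  (k >= 0, in A = the alphabet Z). *)
Record zseq (S A : Type) := ZSeq { pos : nat -> S ; neg : nat -> A }.

Definition coord (S A : Type) (x : zseq S A) (i : Z) : S + A :=
  if (0 <=? i)%Z then inl (pos x (Z.to_nat i))
  else inr (neg x (Z.to_nat (- i - 1))).

(* zip shift: (sigma x)_i = x_{i+1} for i <> -1, (sigma x)_{-1} = tau x_0 *)
Definition zip_shift (S A : Type) (tau : S -> A) (x : zseq S A) : zseq S A :=
  ZSeq (fun n => pos x n.+1)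
       (fun k => match k with 0 => tau (pos x 0) | k'.+1 => neg x k' end).

(* d(x,y) < eps, with d(x,y) = 2^{-M(x,y)}, M(x,y) = min{|i| : x_i <> y_i}.
   Since 2^{-|i|} is maximal at the minimal |i|, d(x,y) < eps iff every
   index i where x and y differ satisfies 2^{-|i|} < eps (d(x,x)=0). *)
Definition dist_lt (S A : Type) (x y : zseq S A) (eps : R) : Prop :=
  forall i : Z, coord x i <> coord y i -> ((/ 2) ^ (Z.abs_nat i) < eps)%R.

Definition dense_in (S A : Type) (P : zseq S A -> Prop) : Prop :=
  forall (y : zseq S A) (eps : R), (0 < eps)%R ->
    exists x, P x /\ dist_lt x y eps.

Definition forward_orbit (S A : Type) (tau : S -> A) (x : zseq S A) :
  zseq S A -> Prop :=
  fun y => exists n : nat, y = ssrnat.iter n (zip_shift tau) x.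

Definition backward_orbit (S A : Type) (tau : S -> A) (x : zseq S A) :
  zseq S A -> Prop :=
  fun y => exists n : nat, ssrnat.iter n (zip_shift tau) y = x.

Definition zip_transitive (S A : Type) (tau : S -> A) : Prop :=
  exists x : zseq S A, dense_in (forward_orbit tau x).

Definition zip_pre_transitive (S A : Type) (tau : S -> A) : Prop :=
  exists x : zseq S A, dense_in (backward_orbit tau x).

(* Main.v *)
From Stdlib Require Import Reals Lra Lia ZArith FunctionalExtensionality.
Require Import Defs.
From mathcomp Require Import all_boot.
From mathcomp Require Import zify.
Set Implicit Arguments.
Unset Strict Implicit.

Section Univ.
Variables (T : countType) (d : T).
Definition blk k := d :: odflt [::] (unpickle k : option (seq T)).
Definition pre m := flatten (map blk (iota 0 m)).
Definition univ n := nth d (pre n.+1) n.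

Lemma pre_S m : pre m.+1 = pre m ++ blk m.
Proof. by rewrite /pre -addn1 iotaD map_cat flatten_cat /= cats0. Qed.

Lemma size_pre m : m <= size (pre m).
Proof.
elim: m => [|m IH] //; rewrite pre_S size_cat /= addnS ltnS.
exact: leq_trans IH (leq_addr _ _).
Qed.

Lemma pre_add m k : exists r, pre (m + k) = pre m ++ r.
Proof.
elim: k => [|k [r IH]]; first by exists [::]; rewrite addn0 cats0.
by exists (r ++ blk (m + k)); rewrite addnS pre_S IH catA.
Qed.

Lemma pre_nth m1 m2 j : m1 <= m2 -> j < size (pre m1) ->
  nth d (pre m1) j = nth d (pre m2) j.
Proof.
move=> le lt; have [r E] := pre_add m1 (m2 - m1).
by rewrite subnKC // in E; rewrite E nth_cat lt.
Qed.

Lemma univ_nth m j : j < size (pre m) -> univ j = nth d (pre m) j.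
Proof.
move=> lt; rewrite /univ.
have lt2 : j < size (pre j.+1) by exact: size_pre.
case: (leqP m j.+1) => H.
  by rewrite (pre_nth H lt).
by rewrite (pre_nth (ltnW H) lt2).
Qed.

Lemma univ_word w : exists m, forall i, i < size w -> univ (m + i) = nth d w i.
Proof.
exists (size (pre (pickle w))).+1 => i lt.
rewrite (@univ_nth (pickle w).+1); last first.
  by rewrite pre_S size_cat /blk pickleK /= addSn -addnS ltn_add2l.
by rewrite pre_S addSn -addnS nth_cat ltnNge leq_addr /= addKn /blk pickleK.
Qed.

Lemma univ_fun (f : nat -> T) L : exists m, forall i, i < L -> univ (m + i) = f i.
Proof.
have [m Hm] := univ_word (mkseq f L).
exists m => i lt; by rewrite Hm ?size_mkseq // nth_mkseq.
Qed.
End Univ.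

Lemma close (S A : Type) (x y : zseq S A) eps N :
  (forall n, (n >= N)%coq_nat -> Rlt (Rabs (pow (Rinv 2) n)) eps) ->
  (forall k, k < N -> pos x k = pos y k /\ neg x k = neg y k) -> dist_lt x y eps.
Proof.
move=> HN Hag i; rewrite /coord.
have pw : forall n, Rle 0 (pow (Rinv 2) n) by move=> n; apply: pow_le; lra.
case E: (0 <=? i)%Z => Hne.
  case: (ltnP (Z.to_nat i) N) => [lt|ge]; first by rewrite (Hag _ lt).1 in Hne.
  have := HN (Z.abs_nat i); rewrite Rabs_right; last by apply: Rle_ge.
  apply; move/leP: ge; move/Z.leb_le: E; lia.
case: (ltnP (Z.to_nat (- i - 1)) N) => [lt|ge]; first by rewrite (Hag _ lt).2 in Hne.
have := HN (Z.abs_nat i); rewrite Rabs_right; last by apply: Rle_ge.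
apply; move/leP: ge; move/Z.leb_gt: E; lia.
Qed.

Lemma iter_pos (S A : Type) (tau : S -> A) n x k :
  pos (iter n (zip_shift tau) x) k = pos x (k + n).
Proof. by elim: n k => [|n IH] k; rewrite ?addn0 //= IH addSnnS. Qed.

Lemma iter_neg (S A : Type) (tau : S -> A) n x k :
  neg (iter n (zip_shift tau) x) k =
  if k < n then tau (pos x (n - 1 - k)) else neg x (k - n).
Proof.
elim: n k => [|n IH] k; first by rewrite subn0.
case: k => [|k] /=; first by rewrite iter_pos; congr (tau (pos x _)); lia.
rewrite IH ltnS; case: ifP => // _; congr (tau (pos x _)); lia.
Qed.

Theorem theorem2 (S A : finType) (tau : S -> A)
  (hS : 0 < #|S|) (hZ : 0 < #|A|) (hZS : #|A| <= #|S|)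
  (htau : forall z : A, exists s : S, tau s = z) :
  zip_transitive tau /\ zip_pre_transitive tau.
Proof.
case/card_gt0P: hS => s0 _; case/card_gt0P: hZ => a0 _.
pose g a := odflt s0 [pick s | tau s == a].
have Hg : forall a, tau (g a) = a.
  move=> a; rewrite /g; case: pickP => [s /eqP //|H].
  by have [s Hs] := htau a; move: (H s); rewrite Hs eqxx.
have getN : forall eps, Rlt 0 eps -> exists N : nat,
    forall n, (n >= N)%coq_nat -> Rlt (Rabs (pow (Rinv 2) n)) eps.
  move=> eps he; apply: pow_lt_1_zero => //; rewrite Rabs_right; lra.
split.
- exists (ZSeq (univ s0) (fun _ => a0)) => y eps he.
  have [N HN] := getN eps he.
  have [m Hm] := univ_fun s0
    (fun i => if i < N then g (neg y (N - 1 - i)) else pos y (i - N)) (N + N).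
  exists (iter (m + N) (zip_shift tau) (ZSeq (univ s0) (fun _ => a0))); split.
    by exists (m + N).
  apply: (close HN) => k lt; rewrite iter_pos iter_neg /=; split.
    have -> : k + (m + N) = m + (N + k) by lia.
    rewrite Hm; last by rewrite ltn_add2l.
    by rewrite ltnNge leq_addr /= addKn.
  rewrite ifT; last by apply: leq_trans lt (leq_addl _ _).
  have -> : m + N - 1 - k = m + (N - 1 - k) by lia.
  rewrite Hm; last by lia.
  rewrite ifT; last by lia.
  rewrite Hg; congr (neg y _); lia.
- exists (ZSeq (fun _ => s0) (univ a0)) => y eps he.
  have [N HN] := getN eps he.
  have [m Hm] := univ_fun a0
    (fun i => if i < N then tau (pos y (N - 1 - i)) else neg y (i - N)) (N + N).
  set n := m + N.
  pose z := ZSeq (fun k => if k < N then pos y k else if k < n then g (univ a0 (n - 1 - k)) else s0)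
                 (fun j => univ a0 (j + n)).
  exists z; split.
    exists n.
    have E1 : pos (iter n (zip_shift tau) z) = (fun _ => s0).
      apply: functional_extensionality => k; rewrite iter_pos /=.
      rewrite ifF; last by lia.
      by rewrite ifF; last by lia.
    have E2 : neg (iter n (zip_shift tau) z) = univ a0.
      apply: functional_extensionality => k; rewrite iter_neg /=.
      case: ifP => lt; last by rewrite subnK // leqNgt lt.
      case: ifP => lt2; last by rewrite ifT; [rewrite Hg; congr univ; lia | lia].
      have -> : k = m + (N - 1 - (n - 1 - k)) by rewrite /n; lia.
      rewrite Hm; last by lia.
      rewrite ifT; last by lia.
      congr (tau (pos y _)); rewrite /n; lia.
    by move: E1 E2; case: (iter n (zip_shift tau) z) => p q /= -> ->.
  apply: (close HN) => k lt /=; rewrite lt; split => //.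
  have -> : k + n = m + (N + k) by rewrite /n; lia.
  rewrite Hm; last by rewrite ltn_add2l.
  by rewrite ltnNge leq_addr /= addKn.
Qed.
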